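(* For all integers $k,r\geq2$ and every real $x\geq r(k-1)$, $$\frac{e^{-x}x^{k-1}}{f_{k-1}(x)\,(k-2)!}<\frac{1}{r-1}.$$
   Context: $f_t(x)=e^{-x}\sum_{i\geq t}x^i/i!$. *)

(* Defs.v *)
From Stdlib Require Import Reals.
From Coquelicot Require Import Coquelicot.
Open Scope R_scope.

(* f_t(x) = e^{-x} * sum_{i >= t} x^i / i!   (series reindexed i = n + t) *)
Definition f_tail (t : nat) (x : R) : R :=
  exp (- x) * Series (fun n : nat => x ^ (n + t) / INR (Factorial.fact (n + t))).

(* Main.v *)
Require Import Defs.
From Stdlib Require Import Reals.
From Coquelicot Require Import Coquelicot.
From Stdlib Require Import Lra Lia.
Open Scope R_scope.

Lemma fact_S_R (n : nat) :
  INR (Factorial.fact (S n)) = INR (S n) * INR (Factorial.fact n).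
Proof. rewrite <- mult_INR. reflexivity. Qed.

Lemma series_ge_partial (b : nat -> R) (N : nat) :
  (forall n, 0 <= b n) -> ex_series b -> sum_f_R0 b N <= Series b.
Proof.
  intros Hb He.
  rewrite (Series_incr_n b (S N)) by (lia || exact He).
  simpl pred.
  assert (0 <= Series (fun k => b (S N + k)%nat)).
  { assert (E : Series (fun _ : nat => 0) = 0).
    { transitivity (Series (fun n : nat => 0 * (fun _ : nat => 0) n)).
      apply Series_ext; intros; ring.
      rewrite Series_scal_l. ring. }
    rewrite <- E. apply Series_le.
    - intros; split; [lra| apply Hb].
    - apply (ex_series_incr_n b (S N)); exact He. }
  lra.
Qed.

Theorem lemma49 (k r : nat) (x : R) :
  (2 <= k)%nat -> (2 <= r)%nat -> INR r * (INR k - 1) <= x ->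
  exp (- x) * x ^ (k - 1)%nat / (f_tail (k - 1)%nat x * INR (Factorial.fact (k - 2)%nat))
  < 1 / (INR r - 1).
Proof.
  intros Hk Hr Hx.
  destruct k as [|[|p]]; try lia.
  replace (S (S p) - 1)%nat with (S p) by lia.
  replace (S (S p) - 2)%nat with p by lia.
  set (m := S p) in *.
  set (N := ((r - 1) * m)%nat).
  assert (HrR : 2 <= INR r) by (apply (le_INR 2); lia).
  assert (HkR : INR (S m) - 1 = INR m).
  { rewrite S_INR; ring. }
  rewrite HkR in Hx.
  assert (HmR : 1 <= INR m) by (apply (le_INR 1); unfold m; lia).
  assert (HNm : INR N + INR m = INR r * INR m).
  { unfold N. rewrite <- plus_INR, <- mult_INR. f_equal.
    destruct r; [lia|]. simpl. lia. }
  assert (Hxpos : 0 < x) by nra.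
  set (b := fun n : nat => x ^ (n + m) / INR (Factorial.fact (n + m))).
  set (c := x ^ m / INR (Factorial.fact m)).
  assert (Hfpos : forall n, 0 < INR (Factorial.fact n)).
  { intro n. apply lt_0_INR. apply Factorial.lt_O_fact. }
  assert (Hbpos : forall n, 0 <= b n).
  { intro n. unfold b. apply Rmult_le_pos. apply pow_le; lra.
    apply Rlt_le, Rinv_0_lt_compat, Hfpos. }
  assert (Hex : ex_series b).
  { assert (H0 : ex_series (fun n => x ^ n / INR (Factorial.fact n))).
    { exists (exp x). eapply is_series_ext; [|apply (is_exp_Reals x)].
      intro n. rewrite pow_n_pow. reflexivity. }
    apply (ex_series_incr_n _ m) in H0.
    eapply ex_series_ext; [|exact H0].
    intro n. unfold b. rewrite Nat.add_comm. reflexivity. }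
  assert (Hstep : forall n, (n <= N)%nat -> c <= b n).
  { induction n as [|n IH]; intro Hn.
    - unfold b, c. simpl. lra.
    - assert (IH' := IH ltac:(lia)).
      assert (Hb : b (S n) = b n * (x / INR (S n + m))).
      { unfold b. simpl (S n + m)%nat. rewrite fact_S_R.
        simpl pow. field. repeat split; apply Rgt_not_eq;
        first [apply Hfpos | apply lt_0_INR; lia]. }
      assert (Hle : INR (S n + m) <= x).
      { apply Rle_trans with (INR N + INR m).
        rewrite <- plus_INR. apply le_INR. lia. nra. }
      assert (Hpos : 0 < INR (S n + m)) by (apply lt_0_INR; lia).
      assert (1 <= x / INR (S n + m)).
      { apply Rmult_le_reg_r with (INR (S n + m)); auto.
        unfold Rdiv. rewrite Rmult_assoc, Rinv_l by lra. lra. }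
      rewrite Hb. assert (0 <= c).
      { unfold c. apply Rmult_le_pos. apply pow_le; lra.
        apply Rlt_le, Rinv_0_lt_compat, Hfpos. }
      nra. }
  assert (Hsum : forall n, (n <= N)%nat -> INR (S n) * c <= sum_f_R0 b n).
  { induction n as [|n IH]; intro Hn.
    - simpl. specialize (Hstep 0%nat ltac:(lia)). lra.
    - simpl sum_f_R0. rewrite S_INR.
      specialize (IH ltac:(lia)). specialize (Hstep (S n) Hn). nra. }
  assert (HS : INR (S N) * c <= Series b).
  { eapply Rle_trans; [apply Hsum; lia|]. apply series_ge_partial; auto. }
  unfold f_tail. fold b.
  assert (Hcpos : 0 < c).
  { unfold c. apply Rmult_lt_0_compat. apply pow_lt; lra.
    apply Rinv_0_lt_compat, Hfpos. }
  assert (Hfm : INR (Factorial.fact m) = INR m * INR (Factorial.fact p)).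
  { unfold m. rewrite fact_S_R. reflexivity. }
  assert (Hxm : x ^ m = c * INR m * INR (Factorial.fact p)).
  { unfold c. rewrite Hfm. field. split; apply Rgt_not_eq; [apply Hfpos|lra]. }
  set (F := INR (Factorial.fact p)) in *.
  assert (HF : 0 < F) by apply Hfpos.
  set (S0 := Series b) in *.
  assert (Hep : 0 < exp (- x)) by apply exp_pos.
  rewrite Hxm. rewrite S_INR in HS.
  assert (HNR : INR N = (INR r - 1) * INR m) by lra.
  rewrite HNR in HS.
  assert (HSpos : 0 < S0).
  { assert (0 < ((INR r - 1) * INR m + 1) * c).
    { apply Rmult_lt_0_compat; [nra|lra]. } lra. }
  replace (exp (- x) * (c * INR m * F) / (exp (- x) * S0 * F))
    with (c * INR m / S0) by (field; lra).
  apply Rmult_lt_reg_r with (S0 * (INR r - 1)). nra.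
  unfold Rdiv. rewrite !Rmult_assoc.
  replace (/ S0 * (S0 * (INR r - 1))) with (INR r - 1) by (field; lra).
  replace (1 * (/ (INR r - 1) * (S0 * (INR r - 1)))) with S0 by (field; lra).
  nra.
Qed.
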